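(* Let $\beta_U,\beta_H,\beta_R>0$ with $\beta_U+\beta_H+\beta_R=1$ and $\beta_U<\tfrac12$, and let $\gamma\ge 0$. For $x\in[0,1]$ define $p_m(x)=\beta_U(1-\beta_U-x\beta_R)^2$, $p_f(x)=\beta_U(\beta_U+x\beta_R)(\beta_U+x\beta_R+\beta_H)$ and $$E[R_r](x)=\frac{\beta_R}{\beta_R+\beta_H}p_m(x)+\frac{(1-x)\beta_R}{\beta_H+(1-x)\beta_R}\,2\gamma\,p_m(x)+\frac{x\beta_R}{x\beta_R+\beta_U}\,\gamma\,p_f(x)+\frac{x\beta_R}{x\beta_R+\beta_U+\beta_H}\,p_f(x).$$ Then $E[R_r](0)<E[R_r](1)$ if and only if $$\gamma<\frac{\frac{\beta_H^2}{1-\beta_U}+\beta_U-\beta_H}{1-2\beta_U}.$$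
   Context: Model of an undercutting attack with safe depth $D=2$ (the undercutter abandons its fork once it is two blocks behind). The undercutter has mining-power fraction $\beta_U$, honest miners have total $\beta_H$, and rational non-undercutting miners have total $\beta_R$. A fraction $x$ of the rational mining power moves to the fork when the fork ties the main chain. $p_m$ and $p_f$ approximate the probabilities that the main chain, respectively the fork, first leads by two blocks. Fees are normalized so the undercut block holds $1$, the subsequent main-chain blocks and the first two fork blocks hold $\gamma$, and the third fork block holds $1$. $E[R_r](x)$ is the rational miners' expected revenue. *)

(* Defs.v *)
From Stdlib Require Import Reals.
Open Scope R_scope.

Definition p_m (bU bH bR x : R) : R := bU * (1 - bU - x * bR) ^ 2.
Definition p_f (bU bH bR x : R) : R := bU * (bU + x * bR) * (bU + x * bR + bH).

Definition ERr (bU bH bR gamma x : R) : R :=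
  bR / (bR + bH) * p_m bU bH bR x
  + (1 - x) * bR / (bH + (1 - x) * bR) * (2 * gamma) * p_m bU bH bR x
  + x * bR / (x * bR + bU) * gamma * p_f bU bH bR x
  + x * bR / (x * bR + bU + bH) * p_f bU bH bR x.

(* Main.v *)
Require Import Defs.
From Stdlib Require Import Reals Lra Psatz.
Open Scope R_scope.

Theorem mainTheorem5 (bU bH bR gamma : R) :
  0 < bU -> 0 < bH -> 0 < bR -> bU + bH + bR = 1 -> bU < 1 / 2 -> 0 <= gamma ->
  (ERr bU bH bR gamma 0 < ERr bU bH bR gamma 1 <->
   gamma < (bH ^ 2 / (1 - bU) + bU - bH) / (1 - 2 * bU)).
Proof.
  intros hU hH hR hs hU2 hg.
  assert (e0 : ERr bU bH bR gamma 0 = bR * bU * ((1 - bU) * (1 + 2 * gamma))).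
  { unfold ERr, p_m, p_f.
    replace (bR + bH) with (1 - bU) by lra.
    replace (bH + (1 - 0) * bR) with (1 - bU) by lra.
    field. lra. }
  assert (e1 : ERr bU bH bR gamma 1 = bR * bU * (bH ^ 2 / (1 - bU) + gamma + 1 - bH)).
  { unfold ERr, p_m, p_f.
    replace (bR + bH) with (1 - bU) by lra.
    replace (1 - bU - 1 * bR) with bH by lra.
    replace (bU + 1 * bR + bH) with 1 by lra.
    replace (1 * bR + bU + bH) with 1 by lra.
    replace (bU + 1 * bR) with (1 - bH) by lra.
    replace (1 * bR + bU) with (1 - bH) by lra.
    replace (bH + (1 - 1) * bR) with bH by lra.
    field. lra. }
  rewrite e0, e1.
  assert (hp : 0 < bR * bU) by nra.
  assert (h1 : 0 < 1 - 2 * bU) by lra.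
  set (A := bH ^ 2 / (1 - bU)).
  split; intro H.
  - apply Rmult_lt_reg_l in H; [|exact hp].
    apply Rmult_lt_reg_r with (1 - 2 * bU); [exact h1|].
    unfold Rdiv. rewrite Rmult_assoc, Rinv_l by lra. lra.
  - apply Rmult_lt_compat_l; [exact hp|].
    apply Rmult_lt_compat_r with (r := 1 - 2 * bU) in H; [|exact h1].
    unfold Rdiv in H. rewrite Rmult_assoc, Rinv_l in H by lra. lra.
Qed.
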